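(* Let $G=K(n_1,\dots,n_s)$ be a complete $s$-partite graph with parts $V_1,\dots,V_s$, $|V_j|=n_j$, $n_1\ge n_2\ge\cdots\ge n_s$, and $n_j\le 5$ for all $j$. Suppose $G$ has at least two parts with at least $3$ vertices. Then there is an optimal $3$-relaxed coloring of $G$ which assigns the same color to three vertices of $V_1$ and three vertices of $V_2$.
   Context: A map $f$ from $V(G)$ to a finite set of colors is a $3$-relaxed coloring if every vertex $u$ has at most $3$ neighbors $v$ with $f(v)=f(u)$; it is optimal if it uses the minimum possible number $\chi_3(G)$ of colors. *)

(* Defs.v *)
From mathcomp Require Import all_boot.
Set Implicit Arguments. Unset Strict Implicit. Unset Printing Implicit Defensive.

Definition relaxed3 (T : finType) (e : rel T) (C : eqType) (f : T -> C) : Prop :=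
  forall u : T, #|[pred v | e u v && (f v == f u)]| <= 3.

Definition colorable3 (T : finType) (e : rel T) (k : nat) : Prop :=
  exists f : T -> 'I_k, relaxed3 e f.

Definition optimal3 (T : finType) (e : rel T) (k : nat) (f : T -> 'I_k) : Prop :=
  relaxed3 e f /\ forall k', colorable3 e k' -> k <= k'.

(* The complete s-partite graph K(n_1,...,n_s): vertices are pairs (j, i)
   with j : 'I_s the part and i : 'I_(n j) the index within part j;
   two vertices are adjacent iff they lie in different parts. *)
Definition Kvtx (s : nat) (n : 'I_s -> nat) : finType := {j : 'I_s & 'I_(n j)}.

Definition Kadj (s : nat) (n : 'I_s -> nat) : rel (Kvtx n) :=
  fun x y => tag x != tag y.

(* Main.v *)
Require Import Defs.
From mathcomp Require Import all_boot zify.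
From Stdlib Require Import Classical.
Set Implicit Arguments. Unset Strict Implicit. Unset Printing Implicit Defensive.

Section K.
Variable s : nat.
Variable n : 'I_s -> nat.
Hypothesis nle5 : forall j, n j <= 5.
Local Notation T := (Kvtx n).
Implicit Types S A B W R D Q P : {set T}.

Definition part (j : 'I_s) : {set T} := [set v | tag v == j].
Definition ok (S : {set T}) :=
  forall u, u \in S -> #|[set v in S | tag v != tag u]| <= 3.
Definition cls k (f : T -> 'I_k) c : {set T} := [set v | f v == c].
Definition valid k (f : T -> 'I_k) := forall c, ok (cls f c).

Lemma cardU_le (A B : {set T}) : #|A :|: B| <= #|A| + #|B|.
Proof. rewrite cardsU; lia. Qed.

Lemma card_part j : #|part j| = n j.
Proof.
have -> : part j = [set Tagged (fun j => 'I_(n j)) i | i in 'I_(n j)].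
  apply/setP => v; rewrite inE; apply/eqP/imsetP.
  - by case: v => j' i /= <-; exists i.
  - by case=> i _ ->.
rewrite card_imset ?card_ord //; move=> x y; exact: eq_from_Tagged.
Qed.

Lemma ok_sub S S' : S \subset S' -> ok S' -> ok S.
Proof.
move=> sub okS' u uS; apply: leq_trans (okS' u (subsetP sub u uS)).
apply: subset_leq_card; apply/subsetP=> v; rewrite !inE => /andP[vS ->].
by rewrite (subsetP sub v vS).
Qed.

Lemma ok_small S : #|S| <= 4 -> ok S.
Proof.
move=> h u uS.
have: [set v in S | tag v != tag u] \subset S :\ u.
  apply/subsetP => v; rewrite !inE => /andP[-> h']; rewrite andbT.
  by apply: contraNneq h' => ->.
move/subset_leq_card; rewrite (cardsD1 u S) uS in h; lia.
Qed.

Lemma ok_two S A B p q : S \subset A :|: B -> A \subset part p ->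
  B \subset part q -> #|A| <= 3 -> #|B| <= 3 -> ok S.
Proof.
move=> sS sA sB hA hB u uS.
have tA : forall v, v \in A -> tag v = p by move=> v /(subsetP sA); rewrite inE => /eqP.
have tB : forall v, v \in B -> tag v = q by move=> v /(subsetP sB); rewrite inE => /eqP.
have := subsetP sS u uS; rewrite inE => /orP[uA|uB].
- apply: leq_trans hB; apply: subset_leq_card; apply/subsetP => v.
  rewrite inE => /andP[vS ne]; have := subsetP sS v vS; rewrite inE => /orP[vA|//].
  by rewrite (tA _ vA) (tA _ uA) eqxx in ne.
- apply: leq_trans hA; apply: subset_leq_card; apply/subsetP => v.
  rewrite inE => /andP[vS ne]; have := subsetP sS v vS; rewrite inE => /orP[//|vB].
  by rewrite (tB _ vB) (tB _ uB) eqxx in ne.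
Qed.

Lemma see4 S u W : ok S -> u \in S -> W \subset S ->
  (forall w, w \in W -> tag w != tag u) -> #|W| <= 3.
Proof.
move=> okS uS sW hW; apply: leq_trans (okS u uS); apply: subset_leq_card.
by apply/subsetP => w wW; rewrite inE (subsetP sW w wW) hW.
Qed.

Lemma mono_of (R : {set T}) (p0 : 'I_s) :
  (forall x y, x \in R -> y \in R -> tag x = tag y) -> exists p, R \subset part p.
Proof.
move=> h; case: (set_0Vmem R) => [->|[x xR]].
  by exists p0; apply/subsetP => v; rewrite inE.
by exists (tag x); apply/subsetP => v vR; rewrite inE (h v x vR xR).
Qed.

Lemma small_mono (R : {set T}) (p0 : 'I_s) : #|R| <= 1 -> exists p, R \subset part p.
Proof.
move/card_le1P => h; apply: (mono_of p0) => x y xR yR.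
by have := h x xR y; rewrite yR inE => /esym/eqP ->.
Qed.

Lemma pick_sub (A B : {set T}) m : A \subset B -> #|A| <= m -> m <= #|B| ->
  exists C : {set T}, [/\ A \subset C, C \subset B & #|C| = m].
Proof.
move=> sAB hA hB.
suff H : forall d, #|A| + d <= #|B| ->
    exists C : {set T}, [/\ A \subset C, C \subset B & #|C| = #|A| + d].
  have := H (m - #|A|); rewrite subnKC //; apply; lia.
elim=> [|d IH] h; first by exists A; rewrite addn0.
have [C [h1 h2 h3]] : exists C : {set T}, [/\ A \subset C, C \subset B & #|C| = #|A| + d] by apply: IH; lia.
have : ~~ (B \subset C).
  apply/negP => /subset_leq_card; lia.
case/subsetPn => x xB xC; exists (x |: C); split.
- by apply: subset_trans h1 (subsetUr _ _).
- by apply/subsetP => v; rewrite !inE => /orP[/eqP->|/(subsetP h2)].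
- by rewrite cardsU1 xC h3; lia.
Qed.


Lemma tag_part j v : (v \in part j) = (tag v == j).
Proof. by rewrite inE. Qed.

Lemma rest_mono3 S D j : ok S -> D \subset S -> D \subset part j -> #|D| = 3 ->
  exists p, S :\: D \subset part p /\ #|S :\: D| <= 3.
Proof.
move=> okS sD dJ cD.
have tD : forall d, d \in D -> tag d = j by move=> d /(subsetP dJ); rewrite inE => /eqP.
have aux : forall x y, x \in S :\: D -> y \in S :\: D -> tag x != j ->
    tag x != tag y -> False.
  move=> x y; rewrite !inE => /andP[xD xS] /andP[yD yS] xj xy.
  have := @see4 S x (y |: D) okS xS.
  have -> : #|y |: D| = 4 by rewrite cardsU1 yD cD.
  move=> H; have : 4 <= 3; last by [].
  apply: H.
  - by apply/subsetP => v; rewrite !inE => /orP[/eqP->//|/(subsetP sD)].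
  - move=> w; rewrite !inE => /orP[/eqP->|/tD->]; first by rewrite eq_sym.
    by rewrite eq_sym.
have mono : forall x y, x \in S :\: D -> y \in S :\: D -> tag x = tag y.
  move=> x y xS yS; case: (eqVneq (tag x) (tag y)) => // ne.
  case: (eqVneq (tag x) j) => xj.
  - have yj : tag y != j by rewrite -xj eq_sym.
    by exfalso; apply: (aux y x) => //; rewrite eq_sym.
  - by exfalso; exact: aux x y xS yS xj ne.
have [p sp] := mono_of j mono; exists p; split => //.
case: (set_0Vmem (S :\: D)) => [->|[x xS]]; first by rewrite cards0.
case: (eqVneq (tag x) j) => xj.
- have : S :\: D \subset part j :\: D.
    apply/subsetP => v vS; move: (vS); rewrite !inE => /andP[-> _] /=.
    by rewrite (mono v x vS xS) xj.
  move/subset_leq_card; rewrite [#|part j :\: D|]cardsD (elimT setIidPr dJ) card_part cD.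
  by have := nle5 j; lia.
- have : 0 < #|D| by rewrite cD.
  case/card_gt0P => d dD.
  apply: (@see4 S d) => //; first by apply: (subsetP sD).
    by apply/subsetP => v; rewrite inE => /andP[].
  by move=> w wS; rewrite (mono w x wS xS) (tD d dD).
Qed.

Lemma four S Q j u a b : ok S -> u \in S -> Q \subset S -> Q \subset part j ->
  #|Q| = 2 -> a \in S -> b \in S -> a != b -> tag a != j -> tag b != j ->
  tag u != j -> tag a != tag u -> tag b != tag u -> False.
Proof.
move=> okS uS sQ qJ cQ aS bS ab aj bj uj au bu.
have tQ : forall d, d \in Q -> tag d = j by move=> d /(subsetP qJ); rewrite inE => /eqP.
have := @see4 S u (a |: (b |: Q)) okS uS.
have bQ : b \notin Q by apply/negP => /tQ /eqP; rewrite (negPf bj).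
have aQ : a \notin b |: Q.
  by rewrite !inE negb_or ab /=; apply/negP => /tQ /eqP; rewrite (negPf aj).
rewrite cardsU1 aQ cardsU1 bQ cQ => H.
have : 4 <= 3; last by [].
apply: H.
- apply/subsetP => v; rewrite !inE => /orP[/eqP->//|/orP[/eqP->//|/(subsetP sQ)//]].
- move=> w; rewrite !inE => /orP[/eqP->//|/orP[/eqP->//|/tQ->]].
  by rewrite eq_sym.
Qed.

Lemma rest_mono2 S Q j : ok S -> Q \subset S -> Q \subset part j -> #|Q| = 2 ->
  3 <= #|S :\: part j| -> exists p, S :\: part j \subset part p.
Proof.
move=> okS sQ qJ cQ cR.
apply: (mono_of j) => x y xR yR.
case: (eqVneq (tag x) (tag y)) => // ne; exfalso.
have xy : x != y by apply: contraNneq ne => ->.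
have : 0 < #|(S :\: part j) :\ x :\ y|.
  move: cR; rewrite (cardsD1 x) xR (cardsD1 y (_ :\ x)) !inE eq_sym xy.
  move: yR; rewrite !inE => /andP[-> ->] /=; lia.
case/card_gt0P => z; rewrite !inE => /andP[zy /andP[zx /andP[zj zS]]].
move: xR yR; rewrite !inE => /andP[xj xS] /andP[yj yS].
case: (eqVneq (tag z) (tag x)) => zx'.
- apply: (@four S Q j y x z) => //; first by rewrite eq_sym.
  by rewrite zx'.
- apply: (@four S Q j x y z) => //; first by rewrite eq_sym.
  by rewrite eq_sym.
Qed.

Lemma relaxed_card k (f : T -> 'I_k) u :
  #|[pred v | Kadj u v & f v == f u]| = #|[set v in cls f (f u) | tag v != tag u]|.
Proof. by apply: eq_card => v; rewrite !inE /Kadj andbC (eq_sym (tag u)). Qed.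

Lemma valid_relaxed k (f : T -> 'I_k) : valid f -> relaxed3 (@Kadj s n) f.
Proof.
move=> vf; rewrite /relaxed3 => u; rewrite relaxed_card.
by apply: vf; rewrite inE.
Qed.

Lemma relaxed_valid k (f : T -> 'I_k) : relaxed3 (@Kadj s n) f -> valid f.
Proof.
move=> rf c u; rewrite inE => /eqP <-; have := rf u.
by rewrite relaxed_card.
Qed.

Lemma valid_mod k (f g : T -> 'I_k) (X : {set 'I_k}) : valid f ->
  (forall v, g v \notin X -> g v = f v) -> (forall c, c \in X -> ok (cls g c)) ->
  valid g.
Proof.
move=> vf hg hX c; case: (boolP (c \in X)) => cX; first exact: hX.
apply: ok_sub (vf c); apply/subsetP => v; rewrite !inE => /eqP gv.
by rewrite -hg gv // eqxx.
Qed.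

Lemma arith1 a b c : 3 < c -> c <= a + b -> a.+1 <= 2 -> b <= 3 -> a.+1 = 2 /\ 3 <= b.
Proof. lia. Qed.

Definition touched k (f g : T -> 'I_k) j :=
  forall v, g v != f v -> f v \in f @: part j /\ g v \in f @: part j.

Definition hspec k (f g : T -> 'I_k) j c D p :=
  [/\ valid g, D \subset part j, #|D| = 3, D \subset cls g c &
     [/\ cls g c :\: D \subset part p, #|cls g c :\: D| <= 3 & touched f g j]].

Lemma inCls k (f : T -> 'I_k) c v : (v \in cls f c) = (f v == c).
Proof. by rewrite inE. Qed.

Lemma half k (f : T -> 'I_k) j : valid f -> 3 <= n j ->
  exists g c D p, @hspec k f g j c D p.
Proof.
move=> vf nj.
have pj : 2 < #|part j| by rewrite card_part.
have Tj : forall v, v \in part j -> f v \in f @: part j by move=> v h; apply: imset_f.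
case: (boolP [exists c, 2 < #|cls f c :&: part j|]) => [/existsP [c hc] | hA].
  have [D [_ sD cD]] : exists D, [/\ set0 \subset D, D \subset cls f c :&: part j & #|D| = 3].
    by apply: pick_sub; rewrite ?cards0 ?sub0set.
  have sD1 : D \subset cls f c by apply: subset_trans sD (subsetIl _ _).
  have sD2 : D \subset part j by apply: subset_trans sD (subsetIr _ _).
  have [p [hp1 hp2]] := rest_mono3 (vf c) sD1 sD2 cD.
  by exists f, c, D, p; split => //; split => // v; rewrite eqxx.
have leA : forall c, #|cls f c :&: part j| <= 2.
  by move=> c; rewrite leqNgt; apply: contra hA => h; apply/existsP; exists c.
case: (boolP [exists c, 1 < #|cls f c :&: part j|]) => [/existsP [c hc] | hB].
  have cQ : #|cls f c :&: part j| = 2 by have := leA c; lia.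
  have : ~~ (part j \subset cls f c :&: part j) by apply/negP => /subset_leq_card; lia.
  case/subsetPn => vd vdj vdQ.
  have dc : f vd != c by apply: contraNneq vdQ => e; rewrite !inE e eqxx; rewrite inE in vdj.
  have [q qQ] : exists q, q \in cls f c :&: part j by apply/card_gt0P; rewrite cQ.
  have qc : f q = c by move: qQ; rewrite !inE => /andP[/eqP].
  have qj : tag q = j by move: qQ; rewrite !inE => /andP[_ /eqP].
  have cTj : c \in f @: part j by rewrite -qc; apply: Tj; rewrite inE qj.
  have dTj : f vd \in f @: part j by apply: Tj.
  have vdj' : tag vd = j by rewrite inE in vdj; apply/eqP.
  have cRc : #|cls f c :\: part j| <= 3.
    apply: (@see4 _ q _ (vf c)); first by rewrite inE qc.
      by apply: subsetDl.
    by move=> w; rewrite !inE qj => /andP[].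
  have sQc : cls f c :&: part j \subset cls f c by apply: subsetIl.
  have sQj : cls f c :&: part j \subset part j by apply: subsetIr.
  have cD : #|vd |: (cls f c :&: part j)| = 3 by rewrite cardsU1 vdQ cQ.
  have sDj : vd |: (cls f c :&: part j) \subset part j.
    by apply/subsetP => v; rewrite !inE => /orP[/eqP->|/andP[_ ->]]; rewrite ?vdj'.
  case: (boolP [exists p, (cls f c :\: part j) \subset part p]) => [/existsP [p hp] | hm].
    pose g v := if v == vd then c else f v.
    have clsg : cls g c \subset (vd |: (cls f c :&: part j)) :|: (cls f c :\: part j).
      apply/subsetP => v; rewrite !inE /g; case: (eqVneq v vd) => [->|ne] /=; first by rewrite eqxx.
      by move=> /eqP ->; rewrite eqxx /=; case: (tag v == j).
    exists g, c, (vd |: (cls f c :&: part j)), p; split => //.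
    - apply: (@valid_mod _ f g [set c] vf).
        by move=> v; rewrite /g; case: eqP => // _; rewrite inE eqxx.
      move=> c'; rewrite inE => /eqP ->.
      by apply: (ok_two clsg sDj hp) => //; rewrite cD.
    - apply/subsetP => v; rewrite !inE /g; case: (eqVneq v vd) => [->|ne] /=; first by rewrite eqxx.
      by case/andP.
    - split.
      + apply: subset_trans hp; apply/subsetP => v; rewrite inE => /andP[vD].
        by move/(subsetP clsg); rewrite inE (negPf vD).
      + apply: leq_trans cRc; apply: subset_leq_card; apply/subsetP => v.
        by rewrite inE => /andP[vD]; move/(subsetP clsg); rewrite inE (negPf vD).
      + move=> v; rewrite /g; case: (eqVneq v vd) => [->|ne]; first by move=> _; split.
        by rewrite eqxx.
  have cRc2 : #|cls f c :\: part j| <= 2.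
    rewrite leqNgt; apply/negP => h.
    have [p hp] := rest_mono2 (vf c) sQc sQj cQ h.
    by move/existsP: hm; apply; exists p.
  have [y yR] : exists y, y \in cls f c :\: part j.
    case: (set_0Vmem (cls f c :\: part j)) => [e|[y h]]; last by exists y.
    by exfalso; move/existsP: hm; apply; exists j; rewrite e sub0set.
  have yc : f y = c by move: yR; rewrite !inE => /andP[_ /eqP].
  have yj : tag y != j by move: yR; rewrite !inE => /andP[].
  have yvd : y != vd by apply: contraNneq yj => ->; rewrite vdj'.
  have Dc : forall v, v \in vd |: (cls f c :&: part j) -> v != vd -> f v = c /\ tag v = j.
    by move=> v; rewrite !inE => /orP[/eqP->|/andP[/eqP -> /eqP ->]]; rewrite ?eqxx.
  case: (leqP #|cls f (f vd) :\ vd| 3) => hLd.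
    pose g v := if v == vd then c else if v == y then f vd else f v.
    have clsgc : cls g c \subset vd |: ((cls f c :&: part j) :|: ((cls f c :\: part j) :\ y)).
      apply/subsetP => v; rewrite !inE /g; case: (eqVneq v vd) => [->|ne] /=; first by rewrite eqxx.
      case: (eqVneq v y) => [->|ney]; first by rewrite (negPf dc).
      by move=> /eqP ->; rewrite eqxx /=; case: (tag v == j).
    have clsgd : cls g (f vd) \subset y |: (cls f (f vd) :\ vd).
      apply/subsetP => v; rewrite !inE /g; case: (eqVneq v vd) => [->|ne] /=.
        by rewrite eq_sym (negPf dc).
      by case: (eqVneq v y) => [->|ney] //=; rewrite ne.
    have c1 : #|(cls f c :\: part j) :\ y| <= 1.
      by move: cRc2; rewrite (cardsD1 y (cls f c :\: part j)) yR.
    have cgc : #|vd |: ((cls f c :&: part j) :|: ((cls f c :\: part j) :\ y))| <= 4.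
      rewrite cardsU1; apply: leq_trans (leq_add (leq_b1 _) (leq_trans (cardU_le _ _) (leq_add (eq_leq cQ) c1))) _.
      by [].
    have sub1 : cls g c :\: (vd |: (cls f c :&: part j)) \subset (cls f c :\: part j) :\ y.
      apply/subsetP => v; rewrite inE => /andP[vD /(subsetP clsgc)].
      rewrite in_setU1 => /orP[/eqP e|]; first by rewrite e setU11 in vD.
      rewrite in_setU => /orP[h|//].
      by rewrite in_setU1 h orbT in vD.
    have [p hp] := small_mono j c1.
    exists g, c, (vd |: (cls f c :&: part j)), p; split => //.
    - apply: (@valid_mod _ f g [set c; f vd] vf).
        move=> v; rewrite /g; case: (eqVneq v vd) => [_|_]; first by rewrite !inE eqxx.
        by case: (eqVneq v y) => [_|_] //; rewrite !inE eqxx orbT.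
      move=> c'; rewrite !inE => /orP[/eqP ->|/eqP ->].
        by apply: ok_small; apply: leq_trans (subset_leq_card clsgc) cgc.
      apply: ok_small; apply: leq_trans (subset_leq_card clsgd) _.
      by rewrite cardsU1; apply: leq_trans (leq_add (leq_b1 _) hLd) _.
    - apply/subsetP => v vD; rewrite inE /g; case: (eqVneq v vd) => [_|ne] /=; first by rewrite eqxx.
      have [fv tv] := Dc v vD ne.
      have nvy : v != y by apply: contraNneq yj => <-; rewrite tv.
      by rewrite (negPf nvy) fv.
    - split.
      + by apply: subset_trans sub1 hp.
      + by apply: leq_trans (subset_leq_card sub1) (leq_trans c1 _).
      + move=> v; rewrite /g; case: (eqVneq v vd) => [->|ne]; first by move=> _; split.
        case: (eqVneq v y) => [->|ney]; last by rewrite eqxx.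
        by rewrite yc => _; split.
  have vdQd : vd \in cls f (f vd) :&: part j by rewrite !inE eqxx vdj' eqxx.
  have cRd : #|cls f (f vd) :\: part j| <= 3.
    apply: (@see4 _ vd _ (vf (f vd))); first by rewrite inE.
      by apply: subsetDl.
    by move=> w; rewrite !inE vdj' => /andP[].
  have Ldsub : cls f (f vd) :\ vd \subset ((cls f (f vd) :&: part j) :\ vd) :|: (cls f (f vd) :\: part j).
    by apply/subsetP => v; rewrite !inE => /andP[-> ->]; case: (tag v == j).
  have [cQd cRd3] : #|cls f (f vd) :&: part j| = 2 /\ 3 <= #|cls f (f vd) :\: part j|.
    have e := cardsD1 vd (cls f (f vd) :&: part j); rewrite vdQd in e.
    have := leA (f vd); rewrite e /= add1n => h; apply: (arith1 _ _ h cRd).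
      exact: hLd.
    apply: leq_trans (subset_leq_card Ldsub) (cardU_le _ _).
  have [p hp] := rest_mono2 (vf (f vd)) (subsetIl _ _) (subsetIr _ _) cQd cRd3.
  pose g v := if (v == vd) || (v \in cls f (f vd) :\: part j) then c
              else if v \in cls f c :\: part j then f vd else f v.
  have clsgc : cls g c \subset (vd |: (cls f c :&: part j)) :|: (cls f (f vd) :\: part j).
    apply/subsetP => v; rewrite inE /g.
    case: ifP => [/orP[/eqP->|h] _|_]; first by rewrite !inE eqxx.
      by rewrite in_setU h orbT.
    case: ifP => [_ /eqP e|nRc /eqP fv]; first by rewrite e eqxx in dc.
    move: nRc; rewrite !inE fv eqxx andbT => /negbFE ->; by rewrite /= orbT.
  have clsgd : cls g (f vd) \subset ((cls f (f vd) :&: part j) :\ vd) :|: (cls f c :\: part j).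
    apply/subsetP => v; rewrite inE /g.
    case: ifP => [_ /eqP e|]; first by rewrite e eqxx in dc.
    move/negbT; rewrite negb_or => /andP[nvd nR].
    case: ifP => [h _|_ /eqP fv]; first by rewrite in_setU h orbT.
    move: nR; rewrite !inE fv eqxx nvd /= andbT => /negbNE ->.
    by [].
  have sub1 : cls g c :\: (vd |: (cls f c :&: part j)) \subset cls f (f vd) :\: part j.
    apply/subsetP => v; rewrite inE => /andP[vD /(subsetP clsgc)].
    by rewrite in_setU (negPf vD).
  exists g, c, (vd |: (cls f c :&: part j)), p; split => //.
  - apply: (@valid_mod _ f g [set c; f vd] vf).
      move=> v; rewrite /g; case: ifP => _; first by rewrite !inE eqxx.
      by case: ifP => _ //; rewrite !inE eqxx orbT.
    move=> c'; rewrite !inE => /orP[/eqP ->|/eqP ->].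
      by apply: (ok_two clsgc sDj hp) => //; rewrite cD.
    apply: ok_small; apply: leq_trans (subset_leq_card clsgd) _.
    apply: leq_trans (cardU_le _ _) _.
    have e := cardsD1 vd (cls f (f vd) :&: part j); rewrite vdQd cQd in e.
    have e1 : #|(cls f (f vd) :&: part j) :\ vd| = 1 by move: e; rewrite /= add1n => -[<-].
    by rewrite e1; apply: leq_trans (leq_add (leqnn 1) cRc2) _.
  - apply/subsetP => v vD; rewrite inE /g; case: (eqVneq v vd) => [_|ne] /=; first by rewrite eqxx.
    have [fv tv] := Dc v vD ne.
    by rewrite !inE tv eqxx /= fv.
  - split.
    + by apply: subset_trans sub1 hp.
    + by apply: leq_trans (subset_leq_card sub1) cRd.
    + move=> v; rewrite /g; case: ifP => [h _|_].
        case/orP: h => [/eqP->|]; first by split.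
        by rewrite !inE => /andP[_ /eqP ->]; split.
      case: ifP => [|_]; last by rewrite eqxx.
      by rewrite !inE => /andP[_ /eqP ->] _; split.
have le1 : forall c, #|cls f c :&: part j| <= 1.
  by move=> c; rewrite leqNgt; apply: contra hB => h; apply/existsP; exists c.
have dist : forall a b, a \in part j -> b \in part j -> a != b -> f a != f b.
  move=> a b aj bj ab; apply/negP => /eqP fab.
  have := le1 (f a); apply/negP; rewrite -ltnNge; apply/card_gt1P.
  by exists a, b; split => //; rewrite in_setI ?aj ?bj inE ?fab eqxx.
have restj : forall a, a \in part j -> forall v, v \in cls f (f a) :\ a -> tag v != j.
  move=> a aj v; rewrite !inE => /andP[va /eqP fv]; apply/negP => vj.
  by have := dist v a; rewrite inE vj fv eqxx va => /(_ isT aj isT).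
have cR : forall a, a \in part j -> #|cls f (f a) :\ a| <= 3.
  move=> a aj; apply: (@see4 _ a _ (vf (f a))); first by rewrite inE.
    by apply: subsetDl.
  by move=> w /(restj a aj); rewrite inE in aj; rewrite (eqP aj).
case/card_gt2P: pj => u1 [u2 [u3 [[h1 h2 h3] [n12 n23 n31]]]].
have d12 := dist u1 u2 h1 h2 n12.
have d23 := dist u2 u3 h2 h3 n23.
have d31 := dist u3 u1 h3 h1 n31.
have cD : #|u1 |: (u2 |: [set u3])| = 3.
  rewrite cardsU1 cardsU1 cards1 !inE negb_or n12 eq_sym n31 /=.
  by rewrite n23.
have sDj : u1 |: (u2 |: [set u3]) \subset part j.
  by apply/subsetP => v; rewrite !in_setU1 in_set1 => /orP[/eqP->|/orP[/eqP->|/eqP->]].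
have T1 := Tj u1 h1. have T2 := Tj u2 h2. have T3 := Tj u3 h3.
case: (leqP #|cls f (f u1) :\ u1| 1) => hR1.
  pose g v := if (v == u2) || (v == u3) then f u1 else f v.
  have clsg : cls g (f u1) \subset (u1 |: (u2 |: [set u3])) :|: (cls f (f u1) :\ u1).
    apply/subsetP => v; rewrite inE /g; case: ifP => [/orP[/eqP->|/eqP->] _|_ fv].
    - by rewrite !inE eqxx orbT.
    - by rewrite !inE eqxx !orbT.
    by rewrite !inE fv andbT; case: (v == u1); rewrite /= ?orbT.
  have sub1 : cls g (f u1) :\: (u1 |: (u2 |: [set u3])) \subset cls f (f u1) :\ u1.
    apply/subsetP => v; rewrite inE => /andP[vD /(subsetP clsg)].
    by rewrite in_setU (negPf vD).
  have [p hp] := small_mono j hR1.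
  exists g, (f u1), (u1 |: (u2 |: [set u3])), p; split => //.
  - apply: (@valid_mod _ f g [set f u1] vf).
      by move=> v; rewrite /g; case: ifP => _ //; rewrite inE eqxx.
    move=> c'; rewrite inE => /eqP ->; apply: ok_small.
    apply: leq_trans (subset_leq_card clsg) _; apply: leq_trans (cardU_le _ _) _.
    by rewrite cD; apply: leq_add (leqnn 3) hR1.
  - apply/subsetP => v; rewrite !inE /g => /orP[/eqP->|/orP[/eqP->|/eqP->]].
    + by rewrite if_same.
    + by rewrite eqxx.
    + by rewrite eqxx orbT.
  - split.
    + by apply: subset_trans sub1 hp.
    + by apply: leq_trans (subset_leq_card sub1) (leq_trans hR1 _).
    + move=> v; rewrite /g; case: ifP => [/orP[/eqP->|/eqP->] _|_]; last by rewrite eqxx.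
      * by split.
      * by split.
case/card_gt1P: hR1 => x [y [xR yR xy]].
have xj := restj u1 h1 x xR. have yj := restj u1 h1 y yR.
have fx : f x = f u1 by move: xR; rewrite !inE => /andP[_ /eqP].
have fy : f y = f u1 by move: yR; rewrite !inE => /andP[_ /eqP].
have neq : forall a v, a \in part j -> tag v != j -> v != a.
  by move=> a v; rewrite inE => /eqP <- vj; apply: contraNneq vj => ->.
pose g v := if (v == u2) || (v == u3) then f u1
            else if v == x then f u2 else if v == y then f u3 else f v.
have clsg1 : cls g (f u1) \subset (u1 |: (u2 |: [set u3])) :|: ((cls f (f u1) :\ u1) :\ x :\ y).
  apply/subsetP => v; rewrite inE /g; case: ifP => [/orP[/eqP->|/eqP->] _|_].
  - by rewrite !inE eqxx orbT.
  - by rewrite !inE eqxx !orbT.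
  case: ifP => [_ /eqP e|vx]; first by rewrite e eqxx in d12.
  case: ifP => [_ /eqP e|vy fv]; first by rewrite e eqxx in d31.
  by rewrite !inE fv vx vy /= andbT; case: (v == u1); rewrite /= ?orbT.
have clsg2 : cls g (f u2) \subset x |: (cls f (f u2) :\ u2).
  apply/subsetP => v; rewrite inE /g; case: ifP => [_ /eqP e|nu]; first by rewrite e eqxx in d12.
  case: ifP => [/eqP-> _|vx]; first by rewrite setU11.
  case: ifP => [_ /eqP e|vy fv]; first by rewrite e eqxx in d23.
  move/negbT: nu; rewrite negb_or => /andP[nu _].
  by rewrite !inE fv vx nu.
have clsg3 : cls g (f u3) \subset y |: (cls f (f u3) :\ u3).
  apply/subsetP => v; rewrite inE /g; case: ifP => [_ /eqP e|nu]; first by rewrite e eqxx in d31.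
  case: ifP => [_ /eqP e|vx]; first by rewrite e eqxx in d23.
  case: ifP => [/eqP-> _|vy fv]; first by rewrite setU11.
  move/negbT: nu; rewrite negb_or => /andP[_ nu].
  by rewrite !inE fv vy nu.
have yR' : y \in (cls f (f u1) :\ u1) :\ x by rewrite in_setD1 eq_sym xy yR.
have cR1 : #|(cls f (f u1) :\ u1) :\ x :\ y| <= 1.
  have := cR u1 h1; rewrite (cardsD1 x) xR (cardsD1 y) yR' /= !add1n.
  by [].
have sub1 : cls g (f u1) :\: (u1 |: (u2 |: [set u3])) \subset (cls f (f u1) :\ u1) :\ x :\ y.
  apply/subsetP => v; rewrite inE => /andP[vD /(subsetP clsg1)].
  by rewrite in_setU (negPf vD).
have [p hp] := small_mono j cR1.
have xu1 : x != u1 by move: xR; rewrite !inE => /andP[].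
have yu1 : y != u1 by move: yR; rewrite !inE => /andP[].
exists g, (f u1), (u1 |: (u2 |: [set u3])), p; split => //.
- apply: (@valid_mod _ f g (f u1 |: (f u2 |: [set f u3])) vf).
    move=> v; rewrite /g; case: ifP => _; first by rewrite !inE eqxx.
    case: ifP => _; first by rewrite !inE eqxx orbT.
    case: ifP => _ //; by rewrite !inE eqxx !orbT.
  move=> c'; rewrite !inE => /orP[/eqP ->|/orP[/eqP ->|/eqP ->]]; apply: ok_small.
  + apply: leq_trans (subset_leq_card clsg1) _; apply: leq_trans (cardU_le _ _) _.
    by rewrite cD; apply: leq_add (leqnn 3) cR1.
  + apply: leq_trans (subset_leq_card clsg2) _; rewrite cardsU1.
    by apply: leq_add (leq_b1 _) (cR u2 h2).
  + apply: leq_trans (subset_leq_card clsg3) _; rewrite cardsU1.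
    by apply: leq_add (leq_b1 _) (cR u3 h3).
- apply/subsetP => v; rewrite !inE /g => /orP[/eqP->|/orP[/eqP->|/eqP->]].
  + by rewrite (negbTE n12) (eq_sym u1 u3) (negbTE n31) (eq_sym u1 x) (negbTE xu1) (eq_sym u1 y) (negbTE yu1).
  + by rewrite eqxx.
  + by rewrite eqxx orbT.
- split.
  + by apply: subset_trans sub1 hp.
  + by apply: leq_trans (subset_leq_card sub1) (leq_trans cR1 _).
  + move=> v; rewrite /g; case: ifP => [/orP[/eqP->|/eqP->] _|_]; first by split.
      by split.
    case: ifP => [/eqP-> _|_]; first by rewrite fx; split.
    case: ifP => [/eqP-> _|_]; first by rewrite fy; split.
    by rewrite eqxx.
Qed.
End K.

Lemma min_ex (P : nat -> Prop) m : P m -> exists k, P k /\ forall k', P k' -> k <= k'.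
Proof.
elim/ltn_ind: m => m IH Pm.
case: (classic (exists k', P k' /\ k' < m)) => [[k' [Pk' lt]]|nex].
  exact: IH k' lt Pk'.
exists m; split => // k' Pk'; rewrite leqNgt; apply/negP => lt; apply: nex.
by exists k'.
Qed.

Unset Implicit Arguments.

Theorem lemma5p3 (s : nat) (n : 'I_s -> nat)
  (npos : forall j, 0 < n j)
  (nsorted : forall i j : 'I_s, i <= j -> n j <= n i)
  (nle5 : forall j, n j <= 5)
  (two_big : exists j1 j2 : 'I_s, [/\ j1 != j2, 3 <= n j1 & 3 <= n j2]) :
  forall i1 i2 : 'I_s, val i1 = 0 -> val i2 = 1 ->
  exists k (f : Kvtx n -> 'I_k), optimal3 (@Kadj s n) f /\
    exists (c : 'I_k) (A B : {set Kvtx n}),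
      [/\ #|A| = 3, #|B| = 3,
          {in A, forall v, tag v = i1 /\ f v = c} &
          {in B, forall v, tag v = i2 /\ f v = c}].
Proof.
move=> i1 i2 h1 h2.
have ne12 : i1 != i2 by apply/eqP => e; rewrite e h2 in h1.
have n2 : 3 <= n i2.
  case: two_big => j1 [j2 [ne a b]].
  case: (posnP (val j1)) => z1.
    case: (posnP (val j2)) => z2.
      have e : j1 = j2 by apply: val_inj; rewrite /= z1 z2.
      by rewrite e eqxx in ne.
    by apply: leq_trans b (nsorted _ _ _); rewrite h2.
  by apply: leq_trans a (nsorted _ _ _); rewrite h2.
have n1 : 3 <= n i1 by apply: leq_trans n2 (nsorted _ _ _); rewrite h1.
have col : colorable3 (@Kadj s n) s.
  exists (fun v => tag v) => u.
  rewrite eq_card0 // => v; rewrite !inE /Kadj.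
  by apply/negP => /andP[ne /eqP e]; rewrite e eqxx in ne.
have [k [[f rf] kmin]] := min_ex col.
have vf := relaxed_valid rf.
have [g1 [c1 [D1 [p1 [vg1 D1j cD1 D1c [P1p cP1 _]]]]]] := half nle5 vf n1.
have tD1 : forall v, v \in D1 -> tag v = i1.
  by move=> v /(subsetP D1j); rewrite inE => /eqP.
have gD1 : forall v, v \in D1 -> g1 v = c1.
  by move=> v /(subsetP D1c); rewrite inE => /eqP.
have pj2 : 3 <= #|part n i2| by rewrite card_part.
case: (boolP (c1 \in g1 @: part n i2)) => hc.
  case/imsetP: hc => u uj e.
  have uP : u \in cls g1 c1 :\: D1.
    rewrite in_setD inE e eqxx andbT; apply/negP => /tD1 tu.
    by move: uj; rewrite inE tu (negbTE ne12).
  have P1j : cls g1 c1 :\: D1 \subset part n i2.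
    have := subsetP P1p u uP; rewrite inE => /eqP tu.
    by move: uj; rewrite inE tu => /eqP <-.
  have [D2 [P1D2 D2j cD2]] := pick_sub P1j cP1 pj2.
  have tD2 : forall v, v \in D2 -> tag v = i2.
    by move=> v /(subsetP D2j); rewrite inE => /eqP.
  pose g3 v := if v \in D2 then c1 else g1 v.
  exists k, g3; split.
    split; last exact: kmin.
    apply: valid_relaxed; apply: (@valid_mod _ _ _ g1 g3 [set c1] vg1).
      by move=> v; rewrite /g3; case: ifP => // _; rewrite inE eqxx.
    move=> c; rewrite inE => /eqP ->.
    apply: (@ok_two _ _ _ D1 D2 i1 i2) => //; last by rewrite cD2.
      apply/subsetP => v; rewrite inE /g3 in_setU; case: ifP => [_ _|nD2 gv]; first by rewrite orbT.
      case: (boolP (v \in D1)) => //= vD.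
      by have := subsetP P1D2 v; rewrite in_setD vD inE gv nD2 => /(_ isT).
    by rewrite cD1.
  exists c1, D1, D2; split => //.
    move=> v vD; split; first exact: tD1.
    rewrite /g3; case: ifP => [vD2|_]; last exact: gD1.
    by have := tD2 v vD2; rewrite (tD1 v vD) => e'; rewrite e' eqxx in ne12.
  by move=> v vD; split; [exact: tD2 | rewrite /g3 vD].
have [g2 [c2 [D2 [p2 [vg2 D2j cD2 D2c [P2p cP2 tch2]]]]]] := half nle5 vg1 n2.
have tD2 : forall v, v \in D2 -> tag v = i2.
  by move=> v /(subsetP D2j); rewrite inE => /eqP.
have c2T : c2 \in g1 @: part n i2.
  have : 0 < #|D2| by rewrite cD2.
  case/card_gt0P => v vD2.
  have vj := subsetP D2j v vD2.
  have gv : g2 v = c2 by have := subsetP D2c v vD2; rewrite inE => /eqP.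
  case: (eqVneq (g2 v) (g1 v)) => e.
    by rewrite -gv e; apply: imset_f.
  by have [_ ] := tch2 v e; rewrite gv.
have c12 : c1 != c2 by apply: contraNneq hc => ->.
have same : forall v, (g2 v == c1) = (g1 v == c1).
  move=> v; case: (eqVneq (g2 v) (g1 v)) => [->//|e].
  have [a b] := tch2 v e.
  have x1 : g1 v != c1 by apply: contraNneq hc => <-.
  have x2 : g2 v != c1 by apply: contraNneq hc => <-.
  by rewrite (negbTE x1) (negbTE x2).
pose g3 v := if v \in cls g1 c1 :\: D1 then c2 else if v \in D2 then c1 else g2 v.
exists k, g3; split.
  split; last exact: kmin.
  apply: valid_relaxed; apply: (@valid_mod _ _ _ g2 g3 [set c1; c2] vg2).
    move=> v; rewrite /g3; case: ifP => _; first by rewrite !inE eqxx orbT.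
    by case: ifP => _ //; rewrite !inE eqxx.
  move=> c; rewrite !inE => /orP[/eqP->|/eqP->].
    apply: (@ok_two _ _ _ D1 D2 i1 i2) => //; last by rewrite cD2.
      apply/subsetP => v; rewrite inE /g3.
      case: ifP => [_ /eqP e|nP]; first by rewrite e eqxx in c12.
      case: ifP => [vD2 _|_ gv]; first by rewrite in_setU vD2 orbT.
      rewrite same in gv; move: nP; rewrite in_setD inE gv andbT => /negbT.
      by rewrite negbK in_setU => ->.
    by rewrite cD1.
  apply: (@ok_two _ _ _ (cls g1 c1 :\: D1) (cls g2 c2 :\: D2) p1 p2) => //.
  apply/subsetP => v; rewrite inE /g3.
  case: ifP => [vP _|_]; first by rewrite in_setU vP.
  case: ifP => [_ /eqP e|nD gv]; first by rewrite e eqxx in c12.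
  by rewrite in_setU (in_setD _ D2) nD (inCls g2) gv orbT.
exists c1, D1, D2; split => //.
  move=> v vD; split; first exact: tD1.
  rewrite /g3 in_setD vD /=.
  case: ifP => [vD2|_]; last by apply/eqP; rewrite same gD1.
  by have := tD2 v vD2; rewrite (tD1 v vD) => e'; rewrite e' eqxx in ne12.
move=> v vD; split; first exact: tD2.
rewrite /g3; case: ifP => [vP|_]; last by rewrite vD.
move: vP; rewrite in_setD inE => /andP[_ /eqP gv].
have : g1 v \in g1 @: part n i2 by apply: imset_f; apply: (subsetP D2j).
by rewrite gv (negbTE hc).
Qed.
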